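(* The formal series $\mathbb F_1,\mathbb F_4$ satisfy $$\mathbb P(\mathbb F_1)-\mathbb Q(\mathbb F_4)=1,\qquad -\mathbb Q(\mathbb F_1)+\mathbb P(\mathbb F_4)=XY.$$
   Context: Let $\Gamma_{k,r}(d,j)$ ($k,r,d\in\mathbb N$, $j\in\{1,2,3,4\}$) be defined as follows. On the $2$-regular Bethe lattice $\mathcal B$ (infinite tree with all nodes of degree $3$, edges of length $1$, $m(B)$ midpoint of edge $B$), a path of length $k\ge1$ from oriented edge $\vec A$ to $\vec B$ is a tuple $(\vec C_0=\vec A,\dots,\vec C_k=\vec B)$ with the terminal node of $\vec C_i$ equal to the initial node of $\vec C_{i+1}$; an inversion is an $i$ with $\vec C_{i+1}=-\vec C_i$. For a pair $(\vec A,\vec B)$ at distance $d=\mathrm{dist}(m(A),m(B))\ge1$: $\vec A$ points toward $B$ if its terminal node is on the geodesic from $m(A)$ to $m(B)$, $\vec B$ points away from $A$ if its initial node is on it; type 1: ($\vec A$ toward, $\vec B$ away), type 2: (toward, toward $A$), type 3: (away from $B$, toward $A$), type 4: (away, away). For $d=0$, types 1,3 mean $\vec B=\vec A$ and types 2,4 mean $\vec B=-\vec A$. For $k\ge1$, $\Gamma_{k,r}(d,j)$ is the number of paths of length $k$ with $r$ inversions from $\vec A$ to $\vec B$ for a pair of type $j$ at distance $d$; for $k=0$, $\Gamma_{0,0}(0,1)=\Gamma_{0,0}(0,3)=1$ and $\Gamma_{0,r}(d,j)=0$ otherwise. Define formal power series $\mathbb F_j=\sum_{k,r,d\ge0}\Gamma_{k,r}(d,j)X^kY^rZ^d$.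 On formal series in $X,Y,Z$ let $\Theta(F)=F-\frac{2X}{Z}(F-F_{|Z=0})$; $\Theta$ is invertible: if $\Theta(F)=\sum_nG_n(X,Y)Z^n$ then $F=\sum_nF_nZ^n$ with $F_n=\sum_{p\ge0}(2X)^pG_{n+p}$. Define $\mathbb P(F)=F-XZF-X^2(Y^2+Y)\Theta^{-1}(F)+X^2Y\,\Theta^{-1}(F)_{|Z=0}$ and $\mathbb Q(F)=2X^2Y\,\partial_Z\Theta^{-1}(F)_{|Z=0}$. *)

(* Defs.v *)
From mathcomp Require Import all_boot all_order all_algebra.
Set Implicit Arguments. Unset Strict Implicit. Unset Printing Implicit Defensive.
Import Order.TTheory GRing.Theory Num.Theory.

(* ---------- The 2-regular Bethe lattice (3-regular tree) ----------
   Nodes: reduced words over {0,1,2} (no two consecutive equal letters),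
   i.e. elements of Z2*Z2*Z2; stored with the last generator at the head.
   Node w is adjacent to w*g for each generator g; this is the Cayley graph
   of Z2*Z2*Z2, which is the infinite tree with all degrees 3. *)
Definition node := seq 'I_3.

Definition nb (g : 'I_3) (w : node) : node :=
  if w is h :: t then (if h == g then t else g :: w) else [:: g].

(* Oriented edge (u, g): from u to nb g u.  Every oriented edge is uniquely
   described by its initial node and its label. *)
Definition oedge := (node * 'I_3)%type.
Definition initn (e : oedge) : node := e.1.
Definition termn (e : oedge) : node := nb e.2 e.1.
Definition erev (e : oedge) : oedge := (termn e, e.2).

Fixpoint paths (k : nat) (A : oedge) : seq (seq oedge) :=
  match k with
  | 0 => [:: [:: A]]
  | k'.+1 => flatten [seq [seq A :: p | p <- paths k' (termn A, g)]
                     | g <- enum 'I_3]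
  end.

Fixpoint inversions (p : seq oedge) : nat :=
  match p with
  | a :: ((b :: _) as t) => (b == erev a) + inversions t
  | _ => 0
  end.

(* ---------- Canonical pair of type j at distance d ----------
   Geodesic of nodes v_0 = [::], v_{i+1} = lab i :: v_i (labels 0,1,2,1,2,...).
   A is the edge {v_0,v_1}; B is the edge {v_d, v_{d+1}}, so that
   dist(m(A), m(B)) = d.  A points toward B iff A = (v_0 -> v_1);
   B points away from A iff B = (v_d -> v_{d+1}).
   For d = 0 this gives B = A for types 1,3 and B = -A for types 2,4. *)
Definition lab (i : nat) : 'I_3 :=
  if i == 0 then ord0 else if odd i then Ordinal (isT : 1 < 3) else ord_max.
Fixpoint vgeo (i : nat) : node :=
  match i with 0 => [::] | i'.+1 => lab i' :: vgeo i' end.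

Definition A_toward : oedge := (vgeo 0, lab 0).
Definition A_away : oedge := erev A_toward.
Definition B_away (d : nat) : oedge := (vgeo d, lab d).
Definition B_toward (d : nat) : oedge := erev (B_away d).

(* types j = 1,2,3,4 (any other j is treated as type 1; unused) *)
Definition canon (d j : nat) : oedge * oedge :=
  match j with
  | 2 => (A_toward, B_toward d)
  | 3 => (A_away, B_toward d)
  | 4 => (A_away, B_away d)
  | _ => (A_toward, B_away d)
  end.

(* For k = 0 this gives
   Gamma_{0,0}(0,1) = Gamma_{0,0}(0,3) = 1 and 0 otherwise, as in the paper. *)
Definition Gamma (k r d j : nat) : nat :=
  let AB := canon d j in
  count (fun p => (last AB.1 p == AB.2) && (inversions p == r)) (paths k AB.1).

(* ---------- Formal power series in X, Y, Z with integer coefficients ----------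
   s k r d = coefficient of X^k Y^r Z^d. *)
Definition ser := nat -> nat -> nat -> int.

Local Open Scope ring_scope.

Definition FF (j : nat) : ser := fun k r d => (Gamma k r d j)%:Z.

Definition ser1 : ser := fun k r d => ((k == 0%N) && (r == 0%N) && (d == 0%N))%:R.
Definition serXY : ser := fun k r d => ((k == 1%N) && (r == 1%N) && (d == 0%N))%:R.

(* Theta^{-1}: if Theta(F) = sum_n G_n Z^n then F_n = sum_p (2X)^p G_{n+p};
   coefficient of X^k Y^r Z^n is sum_{p<=k} 2^p [X^(k-p) Y^r Z^(n+p)] G. *)
Definition ThetaInv (G : ser) : ser :=
  fun k r n => \sum_(0 <= p < k.+1) (2 ^+ p) * G (k - p)%N r (n + p)%N.

(* Theta itself, for reference: Theta(F) = F - (2X/Z)(F - F_{|Z=0}) *)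
Definition Theta (F : ser) : ser :=
  fun k r d => F k r d - (if k is k'.+1 then 2 * F k' r d.+1 else 0).

(* P(F) = F - XZ F - X^2 (Y^2+Y) Theta^{-1}(F) + X^2 Y Theta^{-1}(F)_{|Z=0} *)
Definition PP (F : ser) : ser := fun k r d =>
  let T := ThetaInv F in
  F k r d
  - (if (k, d) is (k'.+1, d'.+1) then F k' r d' else 0)
  - (if k is k'.+2 then
       (if r is r'.+2 then T k' r' d else 0) + (if r is r'.+1 then T k' r' d else 0)
     else 0)
  + (if (k, r, d) is (k'.+2, r'.+1, 0%N) then T k' r' 0%N else 0).

(* Q(F) = 2 X^2 Y (d/dZ Theta^{-1}(F))_{|Z=0} *)
Definition QQ (F : ser) : ser := fun k r d =>
  if (k, r, d) is (k'.+2, r'.+1, 0%N) then 2 * ThetaInv F k' r' 1%N else 0.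

(* Main.v *)
Require Import Defs.
From mathcomp Require Import all_boot all_order all_algebra.
From mathcomp Require Import zify.
Set Implicit Arguments. Unset Strict Implicit. Unset Printing Implicit Defensive.
Import GRing.Theory.

Definition o1 : 'I_3 := Ordinal (isT : 1 < 3).
Definition o2 : 'I_3 := ord_max.

Lemma enum3 : enum 'I_3 = [:: ord0; o1; o2].
Proof. by apply: (inj_map val_inj); rewrite val_enum_ord. Qed.

Lemma ord3_cases (x : 'I_3) : [\/ x = ord0, x = o1 | x = o2].
Proof.
case: x => [[|[|[|m]]] Hm]; [constructor 1|constructor 2|constructor 3|done];
  exact: val_inj.
Qed.

Definition shf (b : bool) (f : nat -> nat) (r : nat) : nat :=
  if b then (if r is r'.+1 then f r' else 0) else f r.

Lemma shf_ext b f f' r : (forall r, f r = f' r) -> shf b f r = shf b f' r.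
Proof. by move=> H; case: b; case: r => /=. Qed.

Lemma shf_sum (I : Type) (s : seq I) b (F : I -> nat -> nat) r :
  shf b (fun r => \sum_(i <- s) F i r) r = \sum_(i <- s) shf b (F i) r.
Proof. case: b; case: r => //= *; by rewrite big1. Qed.

Lemma shf_comm b c f r :
  shf b (fun r => shf c f r) r = shf c (fun r => shf b f r) r.
Proof. by case: b; case: c; case: r => // [] []. Qed.

Fixpoint N (k : nat) (A E : oedge) (r : nat) {struct k} : nat :=
  match k with
  | 0 => ((A == E) && (r == 0))%N
  | k'.+1 => \sum_(g <- enum 'I_3)
               shf ((termn A, g) == erev A) (fun r => N k' (termn A, g) E r) r
  end.

Lemma paths_head k B : all (fun p => p == B :: behead p) (paths k B).
Proof.
case: k => [|k] /=; first by rewrite eqxx.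
apply/allP => p /flattenP [s /mapP [g _ ->] /mapP [q _ ->]] /=.
by rewrite eqxx.
Qed.

Lemma count_N k A E r :
  count (fun p => (last A p == E) && (inversions p == r)) (paths k A) = N k A E r.
elim: k A r => [|k IH] A r /=; first by case: r => [|r]; rewrite addn0.
rewrite count_flatten sumnE !big_map.
apply: eq_bigr => g _.
rewrite count_map.
set B := (termn A, g).
have -> : count (preim (cons A) (fun p => (last A p == E) && (inversions p == r)))
   (paths k B) =
   count (fun p => (last B p == E) && (((B == erev A) + inversions p)%N == r)) (paths k B).
  apply: eq_in_count => p Hp.
  have := allP (paths_head k B) p Hp => /eqP ->.
  by [].
case: (B == erev A) => /=.
- case: r => [|r].
  + by apply/eqP; rewrite eqn0Ngt -has_count; apply/hasP => [[p _ /andP[_]]].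
  + by rewrite -IH.
- by rewrite -IH.
Qed.

Definition red (w : node) : bool := sorted (fun a b : 'I_3 => a != b) w.

Lemma red_cons x t : red (x :: t) -> red t /\ (if t is y :: _ then x != y else true).
Proof. by case: t => [|y t] //= /andP[]. Qed.

Lemma red_nb g u : red u -> red (nb g u).
Proof.
case: u => [|x t] //= Hu.
case: eqP => [_|/eqP ne]; first by case: (red_cons Hu).
by rewrite /= eq_sym ne.
Qed.

Lemma nb_inv g u : red u -> nb g (nb g u) = u.
Proof.
case: u => [|x t] /=; first by rewrite eqxx.
move=> /red_cons [_ Ht].
case: eqP => [<-|/eqP ne] /=; last by rewrite eqxx.
by case: t Ht => [|y t] //= ne; rewrite eq_sym (negbTE ne).
Qed.

Lemma termn_eq A u : red A.1 -> red u -> (termn A == u) = (A.1 == nb A.2 u).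
Proof.
case: A => a g /= Ha Hu; rewrite /termn /=.
apply/eqP/eqP => [<-|->]; by rewrite nb_inv.
Qed.

Lemma o3E : ((ord0 == o1 :> 'I_3) = false) * ((ord0 == o2 :> 'I_3) = false) *
   ((o1 == ord0 :> 'I_3) = false) * ((o1 == o2) = false) * ((o2 == ord0 :> 'I_3) = false) * ((o2 == o1) = false).
Proof. by []. Qed.
Lemma oeqE (x y : node) (g h : 'I_3) :
  ((x, g) == (y, h) :> oedge) = (x == y) && (g == h).
Proof. by []. Qed.


Lemma N_last k A E r : red A.1 -> red E.1 ->
  N k.+1 A E r = \sum_(h <- enum 'I_3) shf (h == E.2) (fun r => N k A (nb h E.1, h) r) r.
Proof.
elim: k A r => [|k IH] A r HA HE.
- rewrite /= enum3 !big_cons !big_nil.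
  case: A HA => a ga HA; case: E HE => u e HE /=.
  have HT := @termn_eq (a, ga) u HA HE; rewrite /= in HT.
  rewrite /erev /termn /= in HT *.
  rewrite !(oeqE (nb ga a)) !(oeqE a) HT.
  have [->|->|->] := ord3_cases ga; have [->|->|->] := ord3_cases e => /=;
  rewrite ?o3E ?eqxx ?andbT ?andbF ?andFb /=; by case: (a == _); case: r.
- rewrite [LHS]/=.
  under eq_bigr => g _.
    rewrite (shf_ext _ _ (fun r => IH (termn A, g) r (red_nb _ HA) HE)) shf_sum.
    under eq_bigr => h _ do rewrite shf_comm.
    over.
  rewrite exchange_big /=.
  apply: eq_bigr => h _.
  by rewrite -shf_sum.
Qed.

Definition state := (bool * bool * nat)%type.

Definition preds (c : state) : seq (state * bool) :=
  match c with
  | (s, true, d.+1) => [:: ((s, true, d), false); ((s, false, d.+1), true); ((s, false, d.+1), false)]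
  | (s, true, 0) => [:: ((~~ s, true, 0), true); ((~~ s, false, 1), false); ((~~ s, false, 1), false)]
  | (s, false, d) => [:: ((s, true, d), true); ((s, false, d.+1), false); ((s, false, d.+1), false)]
  end.

Fixpoint G (k r : nat) (c : state) {struct k} : nat :=
  match k with
  | 0 => ((c == (true, true, 0)) && (r == 0))%N
  | k'.+1 => \sum_(cb <- preds c) shf cb.2 (fun r => G k' r cb.1) r
  end.

Lemma G_S k r c : G k.+1 r c = \sum_(cb <- preds c) shf cb.2 (fun r => G k r cb.1) r.
Proof. by []. Qed.

Lemma G0 r c : G 0 r c = ((c == (true, true, 0%N)) && (r == 0%N))%N.
Proof. by []. Qed.

Arguments G : simpl never.

Definition fl (fa : bool) (c : state) : state := (fa (+) c.1.1, c.1.2, c.2).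

Lemma preds_fl fa c :
  preds (fl fa c) = [seq (fl fa cb.1, cb.2) | cb <- preds c].
Proof.
case: c => [[s o] d]; case: o; case: d => [|d] //=; rewrite /fl /=;
by case: fa; case: s.
Qed.

Definition sd (w : node) : bool := (w != [::]) && (last ord0 w == ord0).
Definition hh (w : node) : nat := (size w - sd w)%N.

Definition st (E : oedge) : state :=
  let: (u, g) := E in
  if (if u is x :: _ then x == g else false) then
    (if hh u == 0%N then (false, true, 0%N) else (sd u, false, hh u))
  else (sd (g :: u), true, hh (g :: u)).

Lemma sd_cons2 y x t : sd (y :: x :: t) = sd (x :: t).
Proof. by []. Qed.

Lemma hh_cons2 y x t : hh (y :: x :: t) = (hh (x :: t)).+1.
Proof. rewrite /hh sd_cons2 /=; case: (sd _) => /=; lia. Qed.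

Lemma hh0 x t : hh (x :: t) = 0%N -> x = ord0 /\ t = [::].
Proof.
rewrite /hh /sd /=; case: t => [|y t] /=.
  by case: eqP => // -> .
case: (_ == _) => /=; lia.
Qed.

Lemma st_in2 h x t : st (h :: x :: t, h) = (sd (x :: t), false, (hh (x :: t)).+1).
Proof. by rewrite /st eqxx hh_cons2. Qed.

Lemma st_t x t : red (x :: t) -> st (t, x) = (sd (x :: t), true, hh (x :: t)).
Proof.
move=> /red_cons [_]; case: t => [|y t] //= ne.
by rewrite eq_sym (negbTE ne).
Qed.

Lemma st_out x t g : x != g -> st (x :: t, g) = (sd (x :: t), true, (hh (x :: t)).+1).
Proof. by move=> ne; rewrite /st (negbTE ne) hh_cons2. Qed.

Lemma st_in x t : st (x :: t, x) =
  if hh (x :: t) == 0%N then (false, true, 0%N) else (sd (x :: t), false, hh (x :: t)).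
Proof. by rewrite /st eqxx. Qed.

Lemma nb_hd x t : nb x (x :: t) = t.
Proof. by rewrite /= eqxx. Qed.
Lemma nb_ne h x t : x != h -> nb h (x :: t) = h :: x :: t.
Proof. by move=> ne; rewrite /= (negbTE ne). Qed.

Lemma pred_lemma u g (f : state -> bool -> nat) : red u ->
  \sum_(h <- enum 'I_3) f (st (nb h u, h)) (h == g) =
  \sum_(cb <- preds (st (u, g))) f cb.1 cb.2.
Proof.
rewrite enum3 !big_cons !big_nil.
case: u => [|x t] Hu.
  have [->|->|->] := ord3_cases g; rewrite /= /hh /sd /= ?o3E ?eqxx /= !big_cons big_nil ?subn0 /=; lia.
have [Ex|Ex|Ex] := ord3_cases x; subst x;
  rewrite ?nb_hd ?nb_ne ?o3E // (st_t Hu) ?st_in2;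
  have [->|->|->] := ord3_cases g; rewrite ?st_in ?st_out ?o3E ?eqxx //=.
all: try (rewrite !big_cons big_nil; lia).
all: case H0: (hh _) => [|d] /=.
all: try (case: (hh0 H0) => _ Et; subst t; rewrite /sd /= ?o3E /= in H0 *; try discriminate).
all: rewrite ?eqxx !big_cons big_nil /=; lia.
Qed.

Lemma st_A E : ((st E == (true,true,0%N)) = (E == A_toward)) *
               ((st E == (false,true,0%N)) = (E == A_away)).
Proof.
case: E => [[|x [|y t]] g].
- by have [->|->|->] := ord3_cases g.
- by have [->|->|->] := ord3_cases x; have [->|->|->] := ord3_cases g.
- rewrite /st hh_cons2 /=; rewrite ?hh_cons2; case: (x == g) => /=; split; rewrite /A_toward /A_away /erev /termn /= ?andbF //; try apply/idP/idP; try (apply/eqP => H; inversion H); move/eqP => H; inversion H.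
Qed.

Lemma fl0 fa c : (fl fa c == (true, true, 0%N)) =
  (c == if fa then (false, true, 0%N) else (true, true, 0%N)).
Proof. by case: c => [[s o] d]; case: fa; case: s. Qed.

Lemma N_G fa k E r : red E.1 ->
  N k (if fa then A_away else A_toward) E r = G k r (fl fa (st E)).
Proof.
elim: k E r => [|k IH] [u g] r HE.
  rewrite /= G0 fl0; case: fa; by rewrite (st_A (u, g)) eq_sym.
have HA : red (if fa then A_away else A_toward).1 by clear IH; case: fa.
rewrite N_last // G_S.
under eq_bigr => h _ do rewrite (shf_ext _ _ (fun r => IH (nb h u, h) r (red_nb h HE))).
rewrite (pred_lemma _ (fun c b => shf b (fun r => G k r (fl fa c)) r) HE).
by rewrite preds_fl big_map.
Qed.

Lemma lab_neq d : lab d != lab d.+1.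
Proof. by case: d => [|d] //; rewrite /lab /=; case: (odd d). Qed.

Lemma size_vgeo d : size (vgeo d) = d.
Proof. by elim: d => //= d ->. Qed.

Lemma last_vgeo x d : last x (vgeo d) = if d is 0 then x else ord0.
Proof. by elim: d x => [|d IH] x //=; rewrite IH; case: d IH. Qed.

Lemma red_vgeo d : red (vgeo d).
Proof.
elim: d => [|d IH] //; case: d IH => [|d] IH //.
rewrite /red /=; apply/andP; split; first by rewrite eq_sym lab_neq.
exact: IH.
Qed.

Lemma st_B d : st (B_away d) = (true, true, d).
Proof.
case: d => [|d] //.
rewrite /B_away [vgeo _]/= st_out; last exact: lab_neq.
rewrite -[lab d :: vgeo d]/(vgeo d.+1) /hh /sd size_vgeo last_vgeo /= subn1.
by [].
Qed.

Lemma Gamma1 k r d : Gamma k r d 1 = G k r (true, true, d).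
Proof.
rewrite /Gamma /= count_N.
have := @N_G false k (B_away d) r (red_vgeo d); rewrite st_B /= => ->.
by [].
Qed.

Lemma Gamma4 k r d : Gamma k r d 4 = G k r (false, true, d).
Proof.
rewrite /Gamma /= count_N.
have := @N_G true k (B_away d) r (red_vgeo d); rewrite st_B /= => ->.
by [].
Qed.

Lemma stE (a b : bool) (n : nat) a' b' n' :
  ((a, b, n) == (a', b', n') :> state) = [&& a == a', b == b' & n == n'].
Proof. by rewrite /eq_op /= andbA. Qed.

Lemma Gout_S k r s d : G k.+1 r (s, true, d.+1) =
  (G k r (s, true, d) + shf true (fun r => G k r (s, false, d.+1)) r + G k r (s, false, d.+1))%N.
Proof. by rewrite G_S /= !big_cons big_nil /= addn0 addnA. Qed.

Lemma Gout0_S k r s : G k.+1 r (s, true, 0%N) =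
  (shf true (fun r => G k r (~~ s, true, 0%N)) r + G k r (~~ s, false, 1%N) + G k r (~~ s, false, 1%N))%N.
Proof. by rewrite G_S /= !big_cons big_nil /= addn0 addnA. Qed.

Lemma Gin_S k r s d : G k.+1 r (s, false, d) =
  (shf true (fun r => G k r (s, true, d)) r + G k r (s, false, d.+1) + G k r (s, false, d.+1))%N.
Proof. by rewrite G_S /= !big_cons big_nil /= addn0 addnA. Qed.

Lemma Z1 k s d : G k 0 (s, false, d.+1) = 0%N.
Proof. elim: k d => [|k IH] d; first by rewrite G0 stE /= andbF. by rewrite Gin_S /= !IH. Qed.

Definition Jst (s : bool) (n : nat) : state :=
  if n is 0 then (~~ s, true, 0%N) else (s, false, n).

Lemma Jrec k r s n :
  G k.+1 r.+1 (Jst s n) = (G k r (s, true, n) + 2 * G k r.+1 (Jst s n.+1))%N.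
Proof.
case: n => [|n] /=.
  by rewrite Gout0_S /= negbK; lia.
by rewrite Gin_S /=; lia.
Qed.

Open Scope ring_scope.

Lemma TI (F : ser) s (HF : forall k r d, F k r d = (G k r (s, true, d))%:Z) k r n :
  ThetaInv F k r n = (G k.+1 r.+1 (Jst s n))%:Z.
Proof.
elim: k n => [|k IH] n.
  rewrite /ThetaInv big_nat1 HF Jrec /= addn0 subn0.
  by rewrite (G0 r.+1) andbF muln0 addn0 expr0 mul1r.
rewrite /ThetaInv big_nat_recl // HF subn0 addn0 expr0 mul1r.
have -> : \sum_(0 <= i < k.+1) 2 ^+ i.+1 * F (k.+1 - i.+1)%N r (n + i.+1)%N =
          2 * ThetaInv F k r n.+1.
  rewrite /ThetaInv big_distrr /=; apply: eq_bigr => i _.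
  by rewrite subSS addnS -addSn exprS mulrA.
by rewrite IH (Jrec k.+1) PoszD PoszM.
Qed.

Lemma F1E k r d : FF 1 k r d = (G k r (true, true, d))%:Z.
Proof. by rewrite /FF Gamma1. Qed.
Lemma F4E k r d : FF 4 k r d = (G k r (false, true, d))%:Z.
Proof. by rewrite /FF Gamma4. Qed.

Arguments FF : simpl never.
Arguments ThetaInv : simpl never.

Theorem lemma4 :
  (forall k r d : nat, PP (FF 1) k r d - QQ (FF 4) k r d = ser1 k r d) /\
  (forall k r d : nat, - QQ (FF 1) k r d + PP (FF 4) k r d = serXY k r d).
Proof.
split=> k r d; rewrite /PP /QQ /ser1 /serXY.
all: case: k => [|[|k]]; case: d => [|d]; case: r => [|[|r]] /=.
all: rewrite ?(TI F1E) ?(TI F4E) ?F1E ?F4E /=.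
all: rewrite ?Gout_S ?Gout0_S /= ?Z1 ?G0 ?stE /= ?Z1.
all: rewrite ?Gout_S ?Gout0_S /= ?Z1 ?G0 ?stE /= ?Z1.
all: lia.
Qed.
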